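(* Let $J=\{m,\dots,m+l-1\}$ with $(J,1)\in\mathcal I$. Let: - $w=a_m(0)=\dots=a_{m+l-1}(0)$; - $c_i=x^{-1}(a_i-w)\in\mathbb C[[x]]$ for $i\in J$; - $\mu=\tfrac12\min_{i\notin J}|a_i(0)-w|$. Let $0<r'\le\varepsilon$ be such that $|a_i(z)-a_i(0)|<\mu$ for all $z\in B_{r'}$ and all $i$. Let $z_0\in B_{r'}^*$. Then the loop $t\mapsto(a_1(e(t)z_0),\dots,a_d(e(t)z_0))$, $t\in[0,1]$, in $Y_d$ is homotopic (relative to its basepoint) to the concatenation of the loop $\lambda_{J,1}$ followed by the loop $$t\mapsto\Big((a_i(e(t)z_0))_{1\le i\le m-1},\ (w+z_0c_i(e(t)z_0))_{m\le i\le m+l-1},\ (a_i(e(t)z_0))_{m+l\le i\le d}\Big).$$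
   Context: **Setting.** Let $d\ge2$ and let $a_1,\dots,a_d\in\mathbb C[[x]]$ be distinct power series with positive radii of convergence. Let $\varepsilon>0$ be such that each $a_i$ converges on the closure of $B_\varepsilon=\{|z|<\varepsilon\}$ and $a_i(z)\ne a_j(z)$ for $0<|z|<\varepsilon$, $i\ne j$. Write $B_\rho^*=\{0<|z|<\rho\}$ and $e(t)=e^{2\pi\sqrt{-1}t}$. **Configuration space.** $Y_d=\mathbb C^d\smallsetminus\bigcup_{i<j}\{z_i=z_j\}$ is the ordered configuration space. **Clusters.** Let $e_{i,j}=v_x(a_i-a_j)$. $\mathcal I$ is the set of pairs $(I,n)$ with $I\subseteq\{1,\dots,d\}$, $|I|\ge2$, and $n\ge1$, such that $e_{i,j}\ge n$ for all distinct $i,j\in I$ and $I$ is maximal with this property. Assume the ordering of the $a_i$ is such that for each $m$, the map $i\mapsto e_{m,i}$ on $\{m+1,\dots,d\}$ is weakly decreasing. With this ordering every $I$ with $(I,n)\in\mathcal I$ is an interval $\{m,\dots,m+l-1\}$. For $(I,n)\in\mathcal I$ with $I=\{m,\dots,m+l-1\}$: - $b_{I,n}$ is the common truncation $\sum_{k<n}c_kx^k$ of the $a_i$, $i\in I$; - $w_{I,n}=b_{I,n}(z_0)$; - $\lambda_{I,n}$ is the loop in $Y_d$ $$t\mapsto\big((a_i(z_0))_{i<m},\ (w_{I,n}+e(t)(a_i(z_0)-w_{I,n}))_{i\in I},\ (a_i(z_0))_{i\ge m+l}\big),\quad t\in[0,1].$$ *)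

(* Defs.v *)
From Stdlib Require Import Reals Lra Lia ClassicalEpsilon.
Open Scope R_scope.

Definition Cx : Type := (R * R)%type.
Definition C0 : Cx := (0, 0).
Definition Cadd (z w : Cx) : Cx := (fst z + fst w, snd z + snd w).
Definition Csub (z w : Cx) : Cx := (fst z - fst w, snd z - snd w).
Definition Cmul (z w : Cx) : Cx :=
  (fst z * fst w - snd z * snd w, fst z * snd w + snd z * fst w).
Definition Cnorm (z : Cx) : R := sqrt (fst z * fst z + snd z * snd z).
Fixpoint Cpow (z : Cx) (n : nat) : Cx :=
  match n with O => (1, 0) | S k => Cmul z (Cpow z k) end.

Definition ee (t : R) : Cx := (cos (2 * PI * t), sin (2 * PI * t)).

(** Formal power series = coefficient sequences; partial sums and convergence. *)
Fixpoint Cpartial (s : nat -> Cx) (z : Cx) (n : nat) : Cx :=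
  match n with
  | O => Cmul (s O) (Cpow z O)
  | S k => Cadd (Cpartial s z k) (Cmul (s (S k)) (Cpow z (S k)))
  end.

Definition Cser_cv (s : nat -> Cx) (z : Cx) (L : Cx) : Prop :=
  forall eps, eps > 0 -> exists N : nat, forall n : nat, (n >= N)%nat ->
    Cnorm (Csub (Cpartial s z n) L) < eps.

(** The value of the power series s at z (its limit when it converges). *)
Definition psum (s : nat -> Cx) (z : Cx) : Cx :=
  epsilon (inhabits C0) (fun L => Cser_cv s z L).

(** v_x(a - b) >= n : the first n coefficients agree. *)
Definition val_ge (s t : nat -> Cx) (n : nat) : Prop :=
  forall k : nat, (k < n)%nat -> s k = t k.

Definition pairwise_ge (a : nat -> nat -> Cx) (I : nat -> Prop) (n : nat) : Prop :=
  forall i j, I i -> I j -> i <> j -> val_ge (a i) (a j) n.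

(** (I,n) is in the set \mathcal I (indices are 0-based: {0,...,d-1}). *)
Definition is_cluster (d : nat) (a : nat -> nat -> Cx) (I : nat -> Prop) (n : nat)
  : Prop :=
  (forall i, I i -> (i < d)%nat) /\
  (exists i j, I i /\ I j /\ i <> j) /\
  (n >= 1)%nat /\
  pairwise_ge a I n /\
  (forall I' : nat -> Prop, (forall i, I' i -> (i < d)%nat) ->
     (forall i, I i -> I' i) -> pairwise_ge a I' n -> forall i, I' i -> I i).

(** Points of Cx^d are functions nat -> Cx (only coordinates < d matter). *)
Definition in_Yd (d : nat) (p : nat -> Cx) : Prop :=
  forall i j, (i < d)%nat -> (j < d)%nat -> i <> j -> p i <> p j.

Definition in01 (t : R) : Prop := 0 <= t <= 1.

Definition cont_square (d : nat) (H : R -> R -> nat -> Cx) : Prop :=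
  forall i, (i < d)%nat -> forall s t, in01 s -> in01 t ->
    forall eps, eps > 0 -> exists delta, delta > 0 /\
      forall s' t', in01 s' -> in01 t' -> Rabs (s' - s) < delta -> Rabs (t' - t) < delta ->
        Cnorm (Csub (H s' t' i) (H s t i)) < eps.

Definition homotopic_rel (d : nat) (g1 g2 : R -> nat -> Cx) : Prop :=
  exists H : R -> R -> nat -> Cx,
    cont_square d H /\
    (forall s t, in01 s -> in01 t -> in_Yd d (H s t)) /\
    (forall t i, in01 t -> (i < d)%nat -> H 0 t i = g1 t i) /\
    (forall t i, in01 t -> (i < d)%nat -> H 1 t i = g2 t i) /\
    (forall s i, in01 s -> (i < d)%nat -> H s 0 i = g1 0 i) /\
    (forall s i, in01 s -> (i < d)%nat -> H s 1 i = g1 1 i).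

Definition concat (g1 g2 : R -> nat -> Cx) (t : R) : nat -> Cx :=
  if Rle_dec t (1/2) then g1 (2 * t) else g2 (2 * t - 1).

Definition inJ (m l i : nat) : Prop := (m <= i < m + l)%nat.
Definition inJb (m l i : nat) : bool := Nat.leb m i && Nat.ltb i (m + l).

(** The loop lambda_{J,1} at z0, with w_{J,1} = w. *)
Definition lambda_loop (a : nat -> nat -> Cx) (m l : nat) (w z0 : Cx) (t : R) : nat -> Cx :=
  fun i => if inJb m l i then Cadd w (Cmul (ee t) (Csub (psum (a i) z0) w))
           else psum (a i) z0.

Definition a_loop (a : nat -> nat -> Cx) (z0 : Cx) (t : R) : nat -> Cx :=
  fun i => psum (a i) (Cmul (ee t) z0).

(** The second loop: w + z0 c_i(e(t) z0) on J, with c_i = x^{-1}(a_i - w). *)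
Definition c_loop (a : nat -> nat -> Cx) (m l : nat) (w z0 : Cx) (t : R) : nat -> Cx :=
  fun i => if inJb m l i
           then Cadd w (Cmul z0 (psum (fun k => a i (S k)) (Cmul (ee t) z0)))
           else psum (a i) (Cmul (ee t) z0).

(* Main.v *)
Require Import Defs.
From Stdlib Require Import Reals Lra Lia ClassicalEpsilon Psatz.
Open Scope R_scope.

Ltac Cdes := repeat match goal with x : Cx |- _ => destruct x end;
  unfold Cadd, Csub, Cmul, C0 in *; simpl in *.

Definition Cinv (u : Cx) : Cx :=
  (fst u / (fst u * fst u + snd u * snd u), - snd u / (fst u * fst u + snd u * snd u)).

Lemma Cnorm_ge0 x : 0 <= Cnorm x.
Proof. unfold Cnorm; apply sqrt_pos. Qed.

Lemma Cnorm_mul x y : Cnorm (Cmul x y) = Cnorm x * Cnorm y.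
Proof.
  unfold Cnorm; rewrite <- sqrt_mult by nra. f_equal. Cdes. ring.
Qed.

Lemma Cnorm_triang x y : Cnorm (Cadd x y) <= Cnorm x + Cnorm y.
Proof.
  unfold Cnorm. destruct x as [r1 r2], y as [r r0]. unfold Cadd; simpl.
  set (u := sqrt (r1 * r1 + r2 * r2)). set (v := sqrt (r * r + r0 * r0)).
  assert (Hu : u * u = r1 * r1 + r2 * r2) by (apply sqrt_sqrt; nra).
  assert (Hv : v * v = r * r + r0 * r0) by (apply sqrt_sqrt; nra).
  assert (u0 : 0 <= u) by apply sqrt_pos. assert (v0 : 0 <= v) by apply sqrt_pos.
  assert (Huv : r1 * r + r2 * r0 <= u * v).
  { assert ((u*v)*(u*v) = (r1*r1+r2*r2)*(r*r+r0*r0)) by (rewrite <- Hu, <- Hv; ring).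
    pose proof (Rle_0_sqr (r1*r0 - r2*r)) as Hsq; unfold Rsqr in Hsq.
    assert (0 <= u * v) by (apply Rmult_le_pos; auto).
    set (w := u * v) in *. set (X := r1 * r + r2 * r0).
    assert (w*w - X*X = (r1*r0 - r2*r)*(r1*r0-r2*r)) by (unfold X; rewrite H; ring).
    destruct (Rle_lt_dec X w); auto. exfalso. nra. }
  rewrite <- (sqrt_Rsqr (u + v)) by lra.
  apply sqrt_le_1_alt. unfold Rsqr. nra.
Qed.

Lemma Csub_split a b c : Csub a c = Cadd (Csub a b) (Csub b c).
Proof. Cdes. f_equal; ring. Qed.

Lemma Cnorm_triang_sub a b c : Cnorm (Csub a c) <= Cnorm (Csub a b) + Cnorm (Csub b c).
Proof. rewrite (Csub_split a b c). apply Cnorm_triang. Qed.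

Lemma Cnorm_sym a b : Cnorm (Csub a b) = Cnorm (Csub b a).
Proof. unfold Cnorm; destruct a as [a1 a2], b as [b1 b2]; unfold Csub; simpl.
  replace ((b1 - a1) * (b1 - a1) + (b2 - a2) * (b2 - a2)) with ((a1 - b1) * (a1 - b1) + (a2 - b2) * (a2 - b2)) by ring. reflexivity. Qed.

Lemma Cnorm_C0 : Cnorm C0 = 0.
Proof. unfold Cnorm, C0; simpl. replace (0*0+0*0) with 0 by ring. apply sqrt_0. Qed.

Lemma Cnorm_eq0 x : Cnorm x = 0 -> x = C0.
Proof.
  unfold Cnorm; intro H. apply sqrt_eq_0 in H; [|destruct x; simpl; nra].
  destruct x; simpl in *. unfold C0. f_equal; nra.
Qed.

Lemma Cnorm_pos x : x <> C0 -> 0 < Cnorm x.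
Proof.
  intro H. destruct (Cnorm_ge0 x) as [h|h]; auto. exfalso; apply H, Cnorm_eq0; auto.
Qed.

Lemma Csub_eq0 x y : Csub x y = C0 -> x = y.
Proof. Cdes. intro H; injection H; intros; f_equal; lra. Qed.

Lemma Csub_same x : Csub x x = C0.
Proof. Cdes. f_equal; ring. Qed.

Lemma Cnorm_fst x : Rabs (fst x) <= Cnorm x.
Proof.
  unfold Cnorm. rewrite <- sqrt_Rsqr_abs. apply sqrt_le_1_alt. unfold Rsqr. nra.
Qed.

Lemma Cnorm_le_abs x : Cnorm x <= Rabs (fst x) + Rabs (snd x).
Proof.
  unfold Cnorm. rewrite <- (sqrt_Rsqr (Rabs (fst x) + Rabs (snd x))).
  2: { pose proof (Rabs_pos (fst x)); pose proof (Rabs_pos (snd x)); lra. }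
  apply sqrt_le_1_alt. unfold Rsqr.
  destruct x as [p q]; simpl.
  pose proof (Rabs_pos p); pose proof (Rabs_pos q).
  assert (Rabs p * Rabs p = p * p) by (rewrite <- Rabs_mult; apply Rabs_right; nra).
  assert (Rabs q * Rabs q = q * q) by (rewrite <- Rabs_mult; apply Rabs_right; nra).
  nra.
Qed.
Lemma Cmul_inv u X : u <> C0 -> Cmul u (Cmul (Cinv u) X) = X.
Proof.
  intro H. assert (Hn : fst u * fst u + snd u * snd u <> 0).
  { intro E. apply H. destruct u as [p q]; simpl in *. unfold C0. f_equal; nra. }
  destruct u as [p q], X as [x y]; unfold Cinv, Cmul; simpl in *. f_equal; field; auto.
Qed.

Lemma Cinv_mul u X : u <> C0 -> Cmul (Cinv u) (Cmul u X) = X.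
Proof.
  intro H. assert (Hn : fst u * fst u + snd u * snd u <> 0).
  { intro E. apply H. destruct u as [p q]; simpl in *. unfold C0. f_equal; nra. }
  destruct u as [p q], X as [x y]; unfold Cinv, Cmul; simpl in *. f_equal; field; auto.
Qed.

Lemma Cmul_1l X : Cmul (1, 0) X = X.
Proof. destruct X; unfold Cmul; simpl; f_equal; ring. Qed.

Lemma Cnorm_one : Cnorm (1, 0) = 1.
Proof. unfold Cnorm; simpl. replace (1*1+0*0) with 1 by ring. apply sqrt_1. Qed.

Lemma Cnorm_inv u : u <> C0 -> Cnorm (Cinv u) * Cnorm u = 1.
Proof.
  intro H. rewrite <- Cnorm_mul. rewrite <- Cnorm_one. f_equal.
  pose proof (Cinv_mul u (1,0) H) as E. 
  replace (Cmul (Cinv u) u) with (Cmul (Cinv u) (Cmul u (1,0))). exact E.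
  f_equal. destruct u; unfold Cmul; simpl; f_equal; ring.
Qed.

Lemma Cinv_sub u v : u <> C0 -> v <> C0 ->
  Csub (Cinv u) (Cinv v) = Cmul (Cmul (Cinv u) (Cinv v)) (Csub v u).
Proof.
  intros H1 H2.
  assert (Hn : fst u * fst u + snd u * snd u <> 0).
  { intro E. apply H1. destruct u as [p q]; simpl in *. unfold C0. f_equal; nra. }
  assert (Hm : fst v * fst v + snd v * snd v <> 0).
  { intro E. apply H2. destruct v as [p q]; simpl in *. unfold C0. f_equal; nra. }
  destruct u as [p q], v as [x y]; unfold Cinv, Cmul, Csub; simpl in *. f_equal; field; auto.
Qed.

Lemma Cnorm_pow z n : Cnorm (Cpow z n) = Cnorm z ^ n.
Proof. induction n; simpl. apply Cnorm_one. rewrite Cnorm_mul, IHn; ring. Qed.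

Lemma Cnorm_ee u : Cnorm (ee u) = 1.
Proof. unfold Cnorm, ee; simpl. rewrite <- sqrt_1. f_equal.
  pose proof (sin2_cos2 (2*PI*u)). unfold Rsqr in *. lra. Qed.

Lemma ee0 : ee 0 = (1, 0).
Proof. unfold ee. rewrite Rmult_0_r, cos_0, sin_0. reflexivity. Qed.

Lemma ee1 : ee 1 = (1, 0).
Proof. unfold ee. rewrite Rmult_1_r, cos_2PI, sin_2PI. reflexivity. Qed.

Lemma Cnorm_ee_mul u z : Cnorm (Cmul (ee u) z) = Cnorm z.
Proof. rewrite Cnorm_mul, Cnorm_ee; ring. Qed.

Lemma Cnorm_nz z : 0 < Cnorm z -> z <> C0.
Proof. intros H E. subst. rewrite Cnorm_C0 in H. lra. Qed.

Definition ccont {X : Type} (D : X -> Prop) (dist : X -> X -> R) (f : X -> Cx) (x : X) : Prop :=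
  forall e, e > 0 -> exists del, del > 0 /\
    forall y, D y -> dist y x < del -> Cnorm (Csub (f y) (f x)) < e.

Definition cdist (y x : Cx) : R := Cnorm (Csub y x).

Section Cont.
Context {X : Type} (D : X -> Prop) (dist : X -> X -> R).

Lemma ccont_const c x : ccont D dist (fun _ => c) x.
Proof. intros e He. exists 1; split; [lra|]. intros. rewrite Csub_same, Cnorm_C0. lra. Qed.

Lemma ccont_add f g x : ccont D dist f x -> ccont D dist g x ->
  ccont D dist (fun y => Cadd (f y) (g y)) x.
Proof.
  intros Hf Hg e He. destruct (Hf (e/2)) as [d1 [d1p H1]]; [lra|].
  destruct (Hg (e/2)) as [d2 [d2p H2]]; [lra|].
  exists (Rmin d1 d2); split. apply Rmin_pos; auto.
  intros y Dy Hy. 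
  replace (Csub (Cadd (f y) (g y)) (Cadd (f x) (g x))) with
    (Cadd (Csub (f y) (f x)) (Csub (g y) (g x))) by
    (destruct (f y), (f x), (g y), (g x); unfold Cadd, Csub; simpl; f_equal; ring).
  eapply Rle_lt_trans. apply Cnorm_triang.
  assert (dist y x < d1) by (eapply Rlt_le_trans; [exact Hy| apply Rmin_l]).
  assert (dist y x < d2) by (eapply Rlt_le_trans; [exact Hy| apply Rmin_r]).
  specialize (H1 y Dy H). specialize (H2 y Dy H0). lra.
Qed.

Lemma ccont_sub f g x : ccont D dist f x -> ccont D dist g x ->
  ccont D dist (fun y => Csub (f y) (g y)) x.
Proof.
  intros Hf Hg e He. destruct (Hf (e/2)) as [d1 [d1p H1]]; [lra|].
  destruct (Hg (e/2)) as [d2 [d2p H2]]; [lra|].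
  exists (Rmin d1 d2); split. apply Rmin_pos; auto.
  intros y Dy Hy. 
  replace (Csub (Csub (f y) (g y)) (Csub (f x) (g x))) with
    (Cadd (Csub (f y) (f x)) (Csub (g x) (g y))) by
    (destruct (f y), (f x), (g y), (g x); unfold Cadd, Csub; simpl; f_equal; ring).
  eapply Rle_lt_trans. apply Cnorm_triang.
  assert (dist y x < d1) by (eapply Rlt_le_trans; [exact Hy| apply Rmin_l]).
  assert (dist y x < d2) by (eapply Rlt_le_trans; [exact Hy| apply Rmin_r]).
  specialize (H1 y Dy H). specialize (H2 y Dy H0). rewrite Cnorm_sym in H2. lra.
Qed.

Lemma ccont_mul f g x : ccont D dist f x -> ccont D dist g x ->
  ccont D dist (fun y => Cmul (f y) (g y)) x.
Proof.
  intros Hf Hg e He.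
  set (A := Cnorm (f x) + 1). set (B := Cnorm (g x) + 1).
  assert (Ap : 0 < A) by (unfold A; pose proof (Cnorm_ge0 (f x)); lra).
  assert (Bp : 0 < B) by (unfold B; pose proof (Cnorm_ge0 (g x)); lra).
  destruct (Hf (e/(2*B))) as [d1 [d1p H1]]. apply Rdiv_lt_0_compat; lra.
  destruct (Hg (Rmin 1 (e/(2*A)))) as [d2 [d2p H2]]. apply Rmin_pos; [lra|apply Rdiv_lt_0_compat; lra].
  exists (Rmin d1 d2); split. apply Rmin_pos; auto.
  intros y Dy Hy.
  replace (Csub (Cmul (f y) (g y)) (Cmul (f x) (g x))) with
    (Cadd (Cmul (Csub (f y) (f x)) (g y)) (Cmul (f x) (Csub (g y) (g x)))) by
    (destruct (f y), (f x), (g y), (g x); unfold Cadd, Csub, Cmul; simpl; f_equal; ring).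
  eapply Rle_lt_trans. apply Cnorm_triang. rewrite !Cnorm_mul.
  assert (dist y x < d1) by (eapply Rlt_le_trans; [exact Hy| apply Rmin_l]).
  assert (dist y x < d2) by (eapply Rlt_le_trans; [exact Hy| apply Rmin_r]).
  specialize (H1 y Dy H). specialize (H2 y Dy H0).
  assert (G1 : Cnorm (Csub (g y) (g x)) < 1) by (eapply Rlt_le_trans; [exact H2|apply Rmin_l]).
  assert (G2 : Cnorm (Csub (g y) (g x)) < e/(2*A)) by (eapply Rlt_le_trans; [exact H2|apply Rmin_r]).
  assert (Gy : Cnorm (g y) <= B).
  { unfold B. pose proof (Cnorm_triang_sub (g y) (g x) C0) as T.
    replace (Csub (g y) C0) with (g y) in T by (destruct (g y); unfold Csub, C0; simpl; f_equal; ring).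
    replace (Csub (g x) C0) with (g x) in T by (destruct (g x); unfold Csub, C0; simpl; f_equal; ring).
    lra. }
  assert (T1 : Cnorm (Csub (f y) (f x)) * Cnorm (g y) <= e/2).
  { replace (e/2) with ((e/(2*B)) * B) by (field; lra).
    apply Rmult_le_compat; try apply Cnorm_ge0; lra. }
  assert (T2 : Cnorm (f x) * Cnorm (Csub (g y) (g x)) < e/2).
  { apply Rle_lt_trans with (A * Cnorm (Csub (g y) (g x))).
    apply Rmult_le_compat_r. apply Cnorm_ge0. unfold A; lra.
    replace (e/2) with (A * (e/(2*A))) by (field; lra).
    apply Rmult_lt_compat_l; auto. }
  lra.
Qed.

Lemma ccont_comp (g : Cx -> Cx) (Dg : Cx -> Prop) f x :
  (forall y, D y -> Dg (f y)) -> D x ->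
  ccont Dg cdist g (f x) -> ccont D dist f x -> ccont D dist (fun y => g (f y)) x.
Proof.
  intros HD Dx Hg Hf e He. destruct (Hg e He) as [d1 [d1p H1]].
  destruct (Hf d1 d1p) as [d2 [d2p H2]]. exists d2; split; auto.
  intros y Dy Hy. apply H1; auto. apply H2; auto.
Qed.

Lemma ccont_restrict (D' : X -> Prop) f x : (forall y, D' y -> D y) ->
  ccont D dist f x -> ccont D' dist f x.
Proof. intros HD Hf e He. destruct (Hf e He) as [d [dp H]]. exists d; split; auto. Qed.

Lemma ccont_ext f g x : (forall y, D y -> f y = g y) -> D x -> ccont D dist f x -> ccont D dist g x.
Proof. intros E Dx Hf e He. destruct (Hf e He) as [d [dp H]]. exists d; split; auto.
  intros y Dy Hy. rewrite <- !E; auto. Qed.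

End Cont.

Lemma ccont_id D x : ccont D cdist (fun z => z) x.
Proof. intros e He. exists e; split; auto. Qed.

Lemma ccont_pow D n x : ccont D cdist (fun z => Cpow z n) x.
Proof. induction n; simpl. apply ccont_const. apply ccont_mul; auto. apply ccont_id. Qed.

Lemma ccont_partial D s n x : ccont D cdist (fun z => Cpartial s z n) x.
Proof. induction n; cbn [Cpartial]. apply ccont_mul. apply ccont_const. apply ccont_pow.
  apply ccont_add; auto. apply ccont_mul. apply ccont_const. apply ccont_pow. Qed.

Lemma ccont_inv (rho : R) x : 0 < rho -> Cnorm x = rho ->
  ccont (fun z => Cnorm z = rho) cdist Cinv x.
Proof.
  intros rp Hx e He. exists (e * rho * rho); split. apply Rmult_lt_0_compat; [|lra]. apply Rmult_lt_0_compat; lra.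
  intros y Hy Hd. unfold cdist in Hd.
  assert (yn : y <> C0) by (apply Cnorm_nz; lra). assert (xn : x <> C0) by (apply Cnorm_nz; lra).
  rewrite Cinv_sub by auto. rewrite !Cnorm_mul.
  pose proof (Cnorm_inv y yn). pose proof (Cnorm_inv x xn). rewrite Hy in H. rewrite Hx in H0.
  assert (Cnorm (Cinv y) = / rho) by (apply (Rmult_eq_reg_r rho); [rewrite H; field|]; lra).
  assert (Cnorm (Cinv x) = / rho) by (apply (Rmult_eq_reg_r rho); [rewrite H0; field|]; lra).
  rewrite H1, H2, Cnorm_sym.
  apply (Rmult_lt_reg_r (rho*rho)). nra.
  replace (/ rho * / rho * Cnorm (Csub y x) * (rho * rho)) with (Cnorm (Csub y x)) by (field; lra).
  lra.
Qed.
Lemma psum_spec s z : (exists L, Cser_cv s z L) -> Cser_cv s z (psum s z).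
Proof. intro H. unfold psum. apply epsilon_spec. exact H. Qed.

Lemma cv_unique s z L1 L2 : Cser_cv s z L1 -> Cser_cv s z L2 -> L1 = L2.
Proof.
  intros H1 H2. apply Csub_eq0, Cnorm_eq0.
  destruct (Cnorm_ge0 (Csub L1 L2)) as [h|h]; [|auto].
  exfalso. set (e := Cnorm (Csub L1 L2)) in *.
  destruct (H1 (e/2)) as [N1 HN1]; [lra|]. destruct (H2 (e/2)) as [N2 HN2]; [lra|].
  specialize (HN1 (max N1 N2) ltac:(lia)). specialize (HN2 (max N1 N2) ltac:(lia)).
  pose proof (Cnorm_triang_sub L1 (Cpartial s z (max N1 N2)) L2).
  rewrite (Cnorm_sym L1 (Cpartial s z (max N1 N2))) in H. fold e in H. lra.
Qed.

Lemma cv_limit_bound s z L n B : Cser_cv s z L ->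
  (forall m, (m >= n)%nat -> Cnorm (Csub (Cpartial s z m) (Cpartial s z n)) <= B) ->
  Cnorm (Csub L (Cpartial s z n)) <= B.
Proof.
  intros HL HB. destruct (Rle_lt_dec (Cnorm (Csub L (Cpartial s z n))) B) as [h|h]; auto.
  exfalso. destruct (HL (Cnorm (Csub L (Cpartial s z n)) - B)) as [N HN]; [lra|].
  specialize (HN (max N n) ltac:(lia)). specialize (HB (max N n) ltac:(lia)).
  pose proof (Cnorm_triang_sub L (Cpartial s z (max N n)) (Cpartial s z n)).
  rewrite (Cnorm_sym (Cpartial s z (max N n)) L) in HN. lra.
Qed.

Lemma bounded_prefix (g : nat -> R) N : exists M, forall k, (k <= N)%nat -> g k <= M.
Proof.
  induction N. exists (g 0%nat). intros k Hk. replace k with 0%nat by lia. lra.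
  destruct IHN as [M HM]. exists (Rmax M (g (S N))). intros k Hk.
  destruct (Nat.eq_dec k (S N)). subst. apply Rmax_r.
  eapply Rle_trans. apply HM; lia. apply Rmax_l.
Qed.

Lemma term_diff s z n : Cmul (s (S n)) (Cpow z (S n)) = Csub (Cpartial s z (S n)) (Cpartial s z n).
Proof. cbn [Cpartial]. destruct (Cpartial s z n), (Cmul (s (S n)) (Cpow z (S n))).
  unfold Cadd, Csub; simpl; f_equal; ring. Qed.

Lemma terms_bounded s z L : Cser_cv s z L -> exists M, forall n, Cnorm (Cmul (s n) (Cpow z n)) <= M.
Proof.
  intro HL. destruct (HL 1) as [N HN]; [lra|].
  destruct (bounded_prefix (fun k => Cnorm (Cmul (s k) (Cpow z k))) N) as [M HM].
  exists (Rmax M 2). intros n. destruct (Compare_dec.le_lt_dec n N). eapply Rle_trans; [apply HM; auto|apply Rmax_l].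
  destruct n; [lia|]. rewrite term_diff.
  eapply Rle_trans; [|apply Rmax_r].
  pose proof (Cnorm_triang_sub (Cpartial s z (S n)) L (Cpartial s z n)).
  pose proof (HN (S n) ltac:(lia)). pose proof (HN n ltac:(lia)). rewrite (Cnorm_sym (Cpartial s z n) L) in H1. lra.
Qed.

Lemma psum_cont s r0 rho : 0 < r0 -> 0 <= rho < r0 ->
  (forall z, Cnorm z <= r0 -> exists L, Cser_cv s z L) ->
  forall z, Cnorm z <= rho -> ccont (fun z => Cnorm z <= rho) cdist (psum s) z.
Proof.
  intros r0p rhop Hc z Hz.
  set (z1 := (r0, 0) : Cx).
  assert (Nz1 : Cnorm z1 = r0).
  { unfold Cnorm, z1; simpl. replace (r0*r0+0*0) with (r0*r0) by ring. apply sqrt_square; lra. }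
  destruct (Hc z1 ltac:(lra)) as [L1 HL1]. destruct (terms_bounded _ _ _ HL1) as [M0 HM0].
  set (M := Rmax M0 0).
  assert (M0p : 0 <= M) by apply Rmax_r.
  assert (HM : forall n, Cnorm (s n) * r0 ^ n <= M).
  { intro n. specialize (HM0 n). rewrite Cnorm_mul, Cnorm_pow, Nz1 in HM0.
    eapply Rle_trans; [exact HM0|apply Rmax_l]. }
  set (q := rho / r0).
  assert (q0 : 0 <= q) by (unfold q; apply Rmult_le_pos; [lra|left; apply Rinv_0_lt_compat; lra]).
  assert (q1 : q < 1) by (unfold q; apply (Rmult_lt_reg_r r0); [lra|]; field_simplify; lra).
  assert (Hterm : forall y k, Cnorm y <= rho -> Cnorm (Cmul (s k) (Cpow y k)) <= M * q ^ k).
  { intros y k Hy. rewrite Cnorm_mul, Cnorm_pow.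
    apply Rle_trans with (Cnorm (s k) * rho ^ k).
    apply Rmult_le_compat_l. apply Cnorm_ge0. apply pow_incr. split; auto. apply Cnorm_ge0.
    replace rho with (r0 * q) by (unfold q; field; lra). rewrite Rpow_mult_distr.
    rewrite <- Rmult_assoc. apply Rmult_le_compat_r. apply pow_le; auto. apply HM. }
  assert (Hdiff : forall y n k, Cnorm y <= rho ->
     Cnorm (Csub (Cpartial s y (n + k)) (Cpartial s y n)) <= M * (q ^ S n - q ^ S (n + k)) / (1 - q)).
  { intros y n k Hy. induction k.
    - rewrite Nat.add_0_r, Csub_same, Cnorm_C0. replace (M * (q ^ S n - q ^ S n) / (1 - q)) with 0 by (field; lra). lra.
    - rewrite Nat.add_succ_r. 
      replace (Csub (Cpartial s y (S (n + k))) (Cpartial s y n)) with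
        (Cadd (Csub (Cpartial s y (n+k)) (Cpartial s y n)) (Cmul (s (S (n+k))) (Cpow y (S (n+k))))).
      2: { cbn [Cpartial]. destruct (Cpartial s y (n+k)), (Cpartial s y n), (Cmul (s (S (n + k))) (Cpow y (S (n + k)))).
           unfold Cadd, Csub; simpl; f_equal; ring. }
      eapply Rle_trans. apply Cnorm_triang.
      pose proof (Hterm y (S (n+k)) Hy).
      replace (M * (q ^ S n - q ^ S (S (n + k))) / (1 - q)) with
        (M * (q ^ S n - q ^ S (n + k)) / (1 - q) + M * q ^ S (n + k)).
      lra. simpl. field. lra. }
  assert (Htail : forall y n, Cnorm y <= rho ->
     Cnorm (Csub (psum s y) (Cpartial s y n)) <= M * q ^ S n / (1 - q)).
  { intros y n Hy. apply cv_limit_bound. apply psum_spec, Hc; lra.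
    intros m Hm. replace m with (n + (m - n))%nat by lia.
    eapply Rle_trans. apply Hdiff; auto.
    unfold Rdiv. apply Rmult_le_compat_r. left; apply Rinv_0_lt_compat; lra.
    apply Rmult_le_compat_l; auto. pose proof (pow_le q (S (n + (m - n))) q0). lra. }
  intros e He.
  destruct (pow_lt_1_zero q ltac:(rewrite Rabs_right; lra) (e * (1 - q) / (3 * (M + 1)))) as [N HN].
  { apply Rdiv_lt_0_compat. nra. lra. }
  specialize (HN N (le_n N)). rewrite Rabs_right in HN by (apply Rle_ge, pow_le; auto).
  assert (Hsmall : M * q ^ S N / (1 - q) < e / 3).
  { apply Rle_lt_trans with ((M+1) * q ^ N / (1 - q)).
    unfold Rdiv. apply Rmult_le_compat_r. left; apply Rinv_0_lt_compat; lra.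
    change (q ^ S N) with (q * q ^ N). pose proof (pow_le q N q0).
    assert (M * (q * q ^ N) <= M * q ^ N) by (apply Rmult_le_compat_l; nra). nra.
    apply (Rmult_lt_reg_r ((1 - q) / (M + 1))). apply Rdiv_lt_0_compat; lra.
    replace ((M + 1) * q ^ N / (1 - q) * ((1 - q) / (M + 1))) with (q ^ N) by (field; lra).
    replace (e / 3 * ((1 - q) / (M + 1))) with (e * (1 - q) / (3 * (M + 1))) by (field; lra). lra. }
  destruct (ccont_partial (fun z => Cnorm z <= rho) s N z (e/3)) as [d [dp Hd]]; [lra|].
  exists d; split; auto. intros y Hy Hyd.
  pose proof (Hd y Hy Hyd).
  pose proof (Htail y N Hy). pose proof (Htail z N Hz).
  pose proof (Cnorm_triang_sub (psum s y) (Cpartial s y N) (psum s z)).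
  pose proof (Cnorm_triang_sub (Cpartial s y N) (Cpartial s z N) (psum s z)).
  rewrite (Cnorm_sym (Cpartial s z N) (psum s z)) in H3. lra.
Qed.

Lemma Cpartial_shift s z n :
  Cpartial s z (S n) = Cadd (s O) (Cmul z (Cpartial (fun k => s (S k)) z n)).
Proof.
  induction n.
  - cbn [Cpartial Cpow]. destruct (s 0%nat), (s 1%nat), z. unfold Cadd, Cmul; simpl; f_equal; ring.
  - change (Cpartial s z (S (S n))) with (Cadd (Cpartial s z (S n)) (Cmul (s (S (S n))) (Cpow z (S (S n))))).
    rewrite IHn. cbn [Cpartial]. change (Cpow z (S (S n))) with (Cmul z (Cpow z (S n))).
    destruct (s 0%nat), (s (S (S n))), z, (Cpartial (fun k : nat => s (S k)) (r3, r4) n), (Cpow (r3,r4) (S n)).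
    unfold Cadd, Cmul; simpl; f_equal; ring.
Qed.

Lemma shift_cv s z L : z <> C0 -> Cser_cv s z L ->
  Cser_cv (fun k => s (S k)) z (Cmul (Cinv z) (Csub L (s O))).
Proof.
  intros zn HL e He. set (c := Cinv z).
  destruct (HL (e / (Cnorm c + 1))) as [N HN]. apply Rdiv_lt_0_compat; [lra|]. pose proof (Cnorm_ge0 c); lra.
  exists N. intros n Hn.
  replace (Cpartial (fun k => s (S k)) z n) with (Cmul c (Csub (Cpartial s z (S n)) (s O))).
  2: { rewrite Cpartial_shift. unfold c. rewrite <- (Cinv_mul z (Cpartial (fun k : nat => s (S k)) z n) zn) at 2.
       f_equal. destruct (s O), (Cmul z (Cpartial (fun k : nat => s (S k)) z n)). unfold Cadd, Csub; simpl; f_equal; ring. }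
  replace (Csub (Cmul c (Csub (Cpartial s z (S n)) (s 0%nat))) (Cmul c (Csub L (s 0%nat))))
    with (Cmul c (Csub (Cpartial s z (S n)) L))
    by (destruct c, (Cpartial s z (S n)), L, (s O); unfold Cmul, Csub; simpl; f_equal; ring).
  rewrite Cnorm_mul. specialize (HN (S n) ltac:(lia)).
  pose proof (Cnorm_ge0 c).
  apply Rle_lt_trans with (Cnorm c * (e / (Cnorm c + 1))). apply Rmult_le_compat_l; lra.
  apply (Rmult_lt_reg_r (Cnorm c + 1)). lra.
  replace (Cnorm c * (e / (Cnorm c + 1)) * (Cnorm c + 1)) with (Cnorm c * e) by (field; lra). nra.
Qed.

Lemma psum_shift s z : z <> C0 -> (exists L, Cser_cv s z L) ->
  psum (fun k => s (S k)) z = Cmul (Cinv z) (Csub (psum s z) (s O)).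
Proof.
  intros zn HL. pose proof (shift_cv s z _ zn (psum_spec s z HL)).
  apply (cv_unique (fun k => s (S k)) z); auto. apply psum_spec. eauto.
Qed.

Lemma psum_C0 s : psum s C0 = s O.
Proof.
  assert (H : Cser_cv s C0 (s O)).
  { intros e He. exists 0%nat. intros n _.
    replace (Cpartial s C0 n) with (s O). rewrite Csub_same, Cnorm_C0; lra.
    induction n. cbn. destruct (s O); unfold Cmul; simpl; f_equal; ring.
    cbn [Cpartial]. rewrite <- IHn. cbn [Cpow]. destruct (s O), (s (S n)), (Cpow C0 n).
    unfold Cadd, Cmul, C0; simpl; f_equal; ring. }
  symmetry. apply (cv_unique s C0); auto. apply psum_spec; eauto.
Qed.
Definition Dsq (p : R * R) : Prop := in01 (fst p) /\ in01 (snd p).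
Definition dsq (p q : R * R) : R := Rmax (Rabs (fst p - fst q)) (Rabs (snd p - snd q)).
Definition alpha (p : R * R) : R := Rmin 1 ((1 + fst p) * snd p).
Definition beta (p : R * R) : R := Rmax 0 ((1 + fst p) * snd p - fst p).

Lemma Rmin1_lip a b : Rabs (Rmin 1 a - Rmin 1 b) <= Rabs (a - b).
Proof. unfold Rmin; destruct (Rle_dec 1 a), (Rle_dec 1 b); unfold Rabs;
  repeat destruct Rcase_abs; lra. Qed.

Lemma Rmax0_lip a b : Rabs (Rmax 0 a - Rmax 0 b) <= Rabs (a - b).
Proof. unfold Rmax; destruct (Rle_dec 0 a), (Rle_dec 0 b); unfold Rabs;
  repeat destruct Rcase_abs; lra. Qed.

Lemma prod_lip s t s' t' : in01 s -> in01 t -> in01 s' -> in01 t' ->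
  Rabs ((1 + s) * t - (1 + s') * t') <= 3 * Rmax (Rabs (s - s')) (Rabs (t - t')).
Proof.
  unfold in01; intros. replace ((1 + s) * t - (1 + s') * t') with ((s - s') * t + (1 + s') * (t - t')) by ring.
  eapply Rle_trans. apply Rabs_triang. rewrite !Rabs_mult.
  pose proof (Rmax_l (Rabs (s - s')) (Rabs (t - t'))). pose proof (Rmax_r (Rabs (s - s')) (Rabs (t - t'))).
  pose proof (Rabs_pos (s - s')). pose proof (Rabs_pos (t - t')).
  rewrite (Rabs_right t) by lra. rewrite (Rabs_right (1 + s')) by lra. nra.
Qed.

Lemma alpha_lip p q : Dsq p -> Dsq q -> Rabs (alpha p - alpha q) <= 4 * dsq p q.
Proof.
  destruct p as [s t], q as [s' t']; unfold Dsq, alpha, dsq; simpl; intros [] [].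
  eapply Rle_trans. apply Rmin1_lip. eapply Rle_trans. apply prod_lip; auto.
  pose proof (Rmax_l (Rabs (s - s')) (Rabs (t - t'))). pose proof (Rabs_pos (s - s')). lra.
Qed.

Lemma beta_lip p q : Dsq p -> Dsq q -> Rabs (beta p - beta q) <= 4 * dsq p q.
Proof.
  destruct p as [s t], q as [s' t']; unfold Dsq, beta, dsq; simpl; intros [] [].
  eapply Rle_trans. apply Rmax0_lip.
  replace ((1 + s) * t - s - ((1 + s') * t' - s')) with (((1 + s) * t - (1 + s') * t') - (s - s')) by ring.
  eapply Rle_trans. apply Rabs_triang. rewrite Rabs_Ropp.
  pose proof (prod_lip s t s' t' H H0 H1 H2).
  pose proof (Rmax_l (Rabs (s - s')) (Rabs (t - t'))). lra.
Qed.

Lemma trig_cont (f : R -> R) (Hf : continuity f) u e : e > 0 ->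
  exists del, del > 0 /\ forall v, Rabs (v - u) < del -> Rabs (f v - f u) < e.
Proof.
  intro He. destruct (Hf u e He) as [alp [alpp H]]. exists alp; split; auto.
  intros v Hv. destruct (Req_dec v u). subst. rewrite Rminus_diag, Rabs_R0. lra.
  apply (H v). split. split; auto. exact I. exact Hv.
Qed.

Lemma ee_cont u e : e > 0 -> exists del, del > 0 /\
  forall v, Rabs (v - u) < del -> Cnorm (Csub (ee v) (ee u)) < e.
Proof.
  intro He. pose proof PI_RGT_0.
  destruct (trig_cont cos continuity_cos (2*PI*u) (e/2)) as [d1 [d1p H1]]; [lra|].
  destruct (trig_cont sin continuity_sin (2*PI*u) (e/2)) as [d2 [d2p H2]]; [lra|].
  exists (Rmin d1 d2 / (2 * PI)); split. apply Rdiv_lt_0_compat. apply Rmin_pos; auto. lra.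
  intros v Hv. assert (Rabs (2*PI*v - 2*PI*u) < Rmin d1 d2).
  { replace (2*PI*v - 2*PI*u) with ((2*PI)*(v-u)) by ring. rewrite Rabs_mult, (Rabs_right (2*PI)) by lra.
    apply (Rmult_lt_reg_l (/ (2*PI))). apply Rinv_0_lt_compat; lra.
    replace (/ (2 * PI) * (2 * PI * Rabs (v - u))) with (Rabs (v - u)) by (field; lra).
    replace (/ (2*PI) * Rmin d1 d2) with (Rmin d1 d2 / (2*PI)) by (field; lra). auto. }
  eapply Rle_lt_trans. apply Cnorm_le_abs. unfold ee, Csub; simpl.
  pose proof (H1 (2*PI*v) ltac:(eapply Rlt_le_trans; [exact H0|apply Rmin_l])).
  pose proof (H2 (2*PI*v) ltac:(eapply Rlt_le_trans; [exact H0|apply Rmin_r])). lra.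
Qed.

Lemma ccont_ee (f : R * R -> R) p : Dsq p -> (forall q, Dsq q -> Rabs (f q - f p) <= 4 * dsq q p) ->
  ccont Dsq dsq (fun q => ee (f q)) p.
Proof.
  intros Dp Hf e He. destruct (ee_cont (f p) e He) as [d [dp Hd]].
  exists (d / 4); split. lra. intros y Dy Hy. apply Hd. specialize (Hf y Dy). lra.
Qed.

Lemma Cmul_assoc a b c : Cmul a (Cmul b c) = Cmul (Cmul a b) c.
Proof. destruct a, b, c; unfold Cmul; simpl; f_equal; ring. Qed.

Lemma Cadd_sub w A : Cadd w (Csub A w) = A.
Proof. destruct w, A; unfold Cadd, Csub; simpl; f_equal; ring. Qed.

Lemma alg1 u v w A : Cmul u v <> C0 ->
  Cadd w (Cmul u (Cmul v (Cmul (Cinv (Cmul u v)) (Csub A w)))) = A.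
Proof. intro H. rewrite Cmul_assoc, Cmul_inv by auto. apply Cadd_sub. Qed.

Lemma Cadd_sub_l w X : Csub (Cadd w X) w = X.
Proof. destruct w, X; unfold Cadd, Csub; simpl; f_equal; ring. Qed.

Lemma mixed_sep (w Ai Aj aj0 e z0 Z : Cx) : Cnorm e = 1 -> Cnorm Z = Cnorm z0 -> Z <> C0 ->
  2 * Cnorm (Csub Ai w) < Cnorm (Csub aj0 w) -> 2 * Cnorm (Csub Aj aj0) < Cnorm (Csub aj0 w) ->
  Cadd w (Cmul e (Cmul z0 (Cmul (Cinv Z) (Csub Ai w)))) <> Aj.
Proof.
  intros He HZ Zn H1 H2 E.
  assert (N : Cnorm (Csub Aj w) = Cnorm (Csub Ai w)).
  { rewrite <- E, Cadd_sub_l, !Cnorm_mul, He. pose proof (Cnorm_inv Z Zn). rewrite HZ in H. rewrite Rmult_1_l, <- Rmult_assoc, (Rmult_comm (Cnorm z0)), H. ring. }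
  pose proof (Cnorm_triang_sub aj0 Aj w). rewrite (Cnorm_sym aj0 Aj) in H.
  pose proof (Cnorm_ge0 (Csub Ai w)). lra.
Qed.

Lemma J_sep w Ai Aj e z0 c : Cnorm e = 1 -> z0 <> C0 -> 0 < Cnorm c -> Ai <> Aj ->
  Cadd w (Cmul e (Cmul z0 (Cmul c (Csub Ai w)))) <> Cadd w (Cmul e (Cmul z0 (Cmul c (Csub Aj w)))).
Proof.
  intros He zn cn Hne E.
  assert (Csub (Cadd w (Cmul e (Cmul z0 (Cmul c (Csub Ai w))))) (Cadd w (Cmul e (Cmul z0 (Cmul c (Csub Aj w)))))
    = Cmul e (Cmul z0 (Cmul c (Csub Ai Aj)))) as Q
    by (destruct w, e, z0, c, Ai, Aj; unfold Cadd, Csub, Cmul; simpl; f_equal; ring).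
  rewrite E, Csub_same in Q. apply (f_equal Cnorm) in Q. rewrite Cnorm_C0, !Cnorm_mul, He in Q.
  pose proof (Cnorm_pos z0 zn).
  assert (Csub Ai Aj <> C0) by (intro X; apply Hne, Csub_eq0, X).
  pose proof (Cnorm_pos _ H0).
  assert (0 < 1 * (Cnorm z0 * (Cnorm c * Cnorm (Csub Ai Aj)))) by
    (rewrite Rmult_1_l; repeat apply Rmult_lt_0_compat; auto). lra.
Qed.

Lemma inJb_iff m l i : inJb m l i = true <-> inJ m l i.
Proof. unfold inJb, inJ. rewrite Bool.andb_true_iff, Nat.leb_le, Nat.ltb_lt. tauto. Qed.
Theorem mainTheorem5
  (d : nat) (a : nat -> nat -> Cx) (eps : R)
  (Hd : (2 <= d)%nat)
  (Hdistinct : forall i j, (i < d)%nat -> (j < d)%nat -> i <> j -> a i <> a j)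
  (Heps : 0 < eps)
  (Hconv : forall i, (i < d)%nat -> forall z, Cnorm z <= eps -> exists L, Cser_cv (a i) z L)
  (Hsep : forall i j, (i < d)%nat -> (j < d)%nat -> i <> j ->
            forall z, 0 < Cnorm z < eps -> psum (a i) z <> psum (a j) z)
  (Horder : forall m0 i j n, (m0 < i)%nat -> (i <= j)%nat -> (j < d)%nat ->
            val_ge (a m0) (a j) n -> val_ge (a m0) (a i) n)
  (m l : nat)
  (HJ : is_cluster d a (inJ m l) 1)
  (r' : R) (Hr' : 0 < r' <= eps)
  (Hmu : forall z i, Cnorm z < r' -> (i < d)%nat ->
           forall k, (k < d)%nat -> ~ inJ m l k ->
             2 * Cnorm (Csub (psum (a i) z) (psum (a i) C0))
               < Cnorm (Csub (psum (a k) C0) (a m O)))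
  (z0 : Cx) (Hz0 : 0 < Cnorm z0 < r') :
  homotopic_rel d (a_loop a z0)
    (concat (lambda_loop a m l (a m O) z0) (c_loop a m l (a m O) z0)).
Proof.
  set (w := a m O). set (rho := Cnorm z0).
  assert (z0n : z0 <> C0) by (apply Cnorm_nz; lra).
  assert (HaJ : forall i, inJ m l i -> a i O = w).
  { destruct HJ as [_ [[i0 [j0 [Hi0 _]]] [_ [Hpw _]]]].
    intros i Hi. destruct (Nat.eq_dec i m). subst; reflexivity.
    apply (Hpw i m Hi); [unfold inJ in *; lia|auto|lia]. }
  set (Zp := fun p : R * R => Cmul (ee (beta p)) z0).
  assert (ZpN : forall p, Cnorm (Zp p) = rho) by (intro; apply Cnorm_ee_mul).
  assert (Zpn : forall p, Zp p <> C0) by (intro p; apply Cnorm_nz; rewrite ZpN; unfold rho; lra).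
  set (Hp := fun i (p : R * R) => if inJb m l i then
     Cadd w (Cmul (ee (alpha p)) (Cmul z0 (Cmul (Cinv (Zp p)) (Csub (psum (a i) (Zp p)) w))))
     else psum (a i) (Zp p)).
  assert (Hconv' : forall i, (i < d)%nat -> forall p, exists L, Cser_cv (a i) (Zp p) L).
  { intros i Hi p. apply Hconv; auto. rewrite ZpN; unfold rho; lra. }
  assert (Zcont : forall p, Dsq p -> ccont Dsq dsq Zp p).
  { intros p Dp. unfold Zp. apply ccont_mul. apply ccont_ee; auto.
    intros q Dq. apply beta_lip; auto. apply ccont_const. }
  assert (Pcont : forall i, (i < d)%nat -> forall p, Dsq p ->
            ccont Dsq dsq (fun q => psum (a i) (Zp q)) p).
  { intros i Hi p Dp. apply (ccont_comp Dsq dsq (psum (a i)) (fun z => Cnorm z <= rho)); auto.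
    intros y _. rewrite ZpN; lra.
    apply (psum_cont (a i) eps rho Heps). unfold rho; split; [apply Cnorm_ge0|lra].
    apply Hconv; auto. rewrite ZpN; lra. }
  exists (fun s t i => Hp i (s, t)).
  split; [|split; [|split; [|split; [|split]]]].
  -
    intros i Hi s t Hs Ht e He.
    assert (C : ccont Dsq dsq (Hp i) (s, t)).
    { assert (Dp : Dsq (s, t)) by (split; auto).
      unfold Hp. destruct (inJb m l i).
      - apply ccont_add. apply ccont_const. apply ccont_mul.
        apply ccont_ee; auto. intros q Dq. apply alpha_lip; auto.
        apply ccont_mul. apply ccont_const. apply ccont_mul.
        apply (ccont_comp Dsq dsq Cinv (fun z => Cnorm z = rho)); auto.
        apply ccont_inv; auto. unfold rho; lra.
        apply ccont_sub. apply Pcont; auto. apply ccont_const.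
      - apply Pcont; auto. }
    destruct (C e He) as [del [delp Hdel]]. exists del; split; auto.
    intros s' t' Hs' Ht' H1 H2. apply (Hdel (s', t')). split; auto.
    unfold dsq; simpl. apply Rmax_lub_lt; auto.
  -
    intros s t Hs Ht i j Hi Hj Hij. set (p := (s, t)). unfold Hp.
    assert (ZN : 0 < Cnorm (Zp p) < eps) by (rewrite ZpN; unfold rho; lra).
    assert (ZR : Cnorm (Zp p) < r') by (rewrite ZpN; unfold rho; lra).
    assert (Hsep' := Hsep i j Hi Hj Hij (Zp p) ZN).
    destruct (inJb m l i) eqn:Ei, (inJb m l j) eqn:Ej.
    + apply J_sep; auto. apply Cnorm_ee.
      pose proof (Cnorm_inv (Zp p) (Zpn p)). destruct (Cnorm_ge0 (Cinv (Zp p))) as [h|h]; auto.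
      rewrite <- h in H; lra.
    + apply inJb_iff in Ei. assert (NJ : ~ inJ m l j) by (rewrite <- inJb_iff, Ej; discriminate).
      apply (mixed_sep w _ _ (a j O)); auto. apply Cnorm_ee.
      pose proof (Hmu (Zp p) i ZR Hi j Hj NJ). rewrite !psum_C0, HaJ in H; auto.
      pose proof (Hmu (Zp p) j ZR Hj j Hj NJ). rewrite !psum_C0 in H; auto.
    + apply inJb_iff in Ej. assert (NJ : ~ inJ m l i) by (rewrite <- inJb_iff, Ei; discriminate).
      intro E. symmetry in E. revert E.
      apply (mixed_sep w _ _ (a i O)); auto. apply Cnorm_ee.
      pose proof (Hmu (Zp p) j ZR Hj i Hi NJ). rewrite !psum_C0, HaJ in H; auto.
      pose proof (Hmu (Zp p) i ZR Hi i Hi NJ). rewrite !psum_C0 in H; auto.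
    + auto.
  -
    intros t i Ht Hi. unfold Hp, Zp, a_loop.
    assert (A : alpha (0, t) = t) by (unfold alpha; simpl; unfold in01 in *; rewrite Rmin_right by lra; lra).
    assert (B : beta (0, t) = t) by (unfold beta; simpl; unfold in01 in *; rewrite Rmax_right by lra; lra).
    rewrite A, B. destruct (inJb m l i); auto. apply alg1. apply Cnorm_nz. rewrite Cnorm_ee_mul; lra.
  -
    intros t i Ht Hi. unfold Hp, Zp, concat, lambda_loop, c_loop. fold w.
    destruct (Rle_dec t (1/2)).
    + assert (A : alpha (1, t) = 2 * t) by (unfold alpha; simpl; unfold in01 in *; rewrite Rmin_right by lra; lra).
      assert (B : beta (1, t) = 0) by (unfold beta; simpl; unfold in01 in *; rewrite Rmax_left by lra; lra).
      rewrite A, B, ee0, Cmul_1l. destruct (inJb m l i); auto.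
      f_equal. f_equal. rewrite Cmul_inv; auto.
    + assert (A : alpha (1, t) = 1) by (unfold alpha; simpl; unfold in01 in *; rewrite Rmin_left by lra; lra).
      assert (B : beta (1, t) = 2 * t - 1) by (unfold beta; simpl; unfold in01 in *; rewrite Rmax_right by lra; lra).
      rewrite A, B, ee1, Cmul_1l. destruct (inJb m l i) eqn:Ei; auto.
      apply inJb_iff in Ei.
      rewrite psum_shift, HaJ; auto.
      apply Cnorm_nz. rewrite Cnorm_ee_mul; lra.
      apply Hconv; auto. rewrite Cnorm_ee_mul; lra.
  -
    intros s i Hs Hi. unfold Hp, Zp, a_loop.
    assert (A : alpha (s, 0) = 0) by (unfold alpha; simpl; unfold in01 in *; rewrite Rmin_right by lra; lra).
    assert (B : beta (s, 0) = 0) by (unfold beta; simpl; unfold in01 in *; rewrite Rmax_left by lra; lra).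
    rewrite A, B. destruct (inJb m l i); auto. apply alg1. apply Cnorm_nz. rewrite Cnorm_ee_mul; lra.
  -
    intros s i Hs Hi. unfold Hp, Zp, a_loop.
    assert (A : alpha (s, 1) = 1) by (unfold alpha; simpl; unfold in01 in *; rewrite Rmin_left by lra; lra).
    assert (B : beta (s, 1) = 1) by (unfold beta; simpl; unfold in01 in *; rewrite Rmax_right by lra; lra).
    rewrite A, B. destruct (inJb m l i); auto. apply alg1. apply Cnorm_nz. rewrite Cnorm_ee_mul; lra.
Qed.
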